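(* Let $C$ be a cycle and $T$ a shortcut tree for $C$ with respect to a length-function $\ell$ on $T\cup C$, and assume $V(C)=L(T)$, $|L(T)|\ge 3$, and $T$ has no vertex of degree $2$. Let $e_0\in E(C)$ be arbitrary. Then for any two distinct edges $e_1,e_2$ of $C$ sharing an endpoint we have $\ell(e_1)+\ell(e_2)>\ell(e_0)$. In particular $\ell(e_0)<\ell(C)/2$.
   Context: Graphs are finite, parallel edges allowed, no loops. A length-function is a map $\ell:E\to\mathbb{R}^+$ (strictly positive reals); $\ell(H)=\sum_{e\in E(H)}\ell(e)$. $\mathrm{sd}_G(A)$ is the minimum of $\ell(S)$ over connected subgraphs $S\subseteq G$ with $A\subseteq V(S)$. $L(T)$ is the set of leaves of $T$. Shortcut tree: let $H$ be a graph, $T$ a tree, both subgraphs of $T\cup H$, and $\ell$ a length-function on $T\cup H$. Then $T$ is a shortcut tree for $H$ if (SCT1) $V(T)\cap V(H)=L(T)$; (SCT2) $E(T)\cap E(H)=\emptyset$; (SCT3) $\ell(T)<\mathrm{sd}_H(L(T))$; (SCT4) for every proper subset $B\subsetneq L(T)$, $\mathrm{sd}_H(B)\le\mathrm{sd}_T(B)$. *)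

(* Defs.v *)
(* Finite multigraphs (parallel edges allowed, no loops). *)
From HB Require Import structures.
From mathcomp Require Import all_boot all_order all_algebra.
Set Implicit Arguments. Unset Strict Implicit. Unset Printing Implicit Defensive.
Import Order.TTheory GRing.Theory Num.Theory.

Record subgraph (V E : finType) := Subgraph { vs : {set V}; es : {set E} }.

Section Graphs.
Variables (V E : finType) (src tgt : E -> V).

Definition inc (e : E) (v : V) : bool := (src e == v) || (tgt e == v).

Definition wf (S : subgraph V E) : Prop :=
  forall e, e \in es S -> (src e \in vs S) /\ (tgt e \in vs S).

Definition subg (S H : subgraph V E) : Prop :=
  vs S \subset vs H /\ es S \subset es H.

Definition adj (S : subgraph V E) : rel V := fun x y =>
  [exists e, (e \in es S) &&
     (((src e == x) && (tgt e == y)) || ((src e == y) && (tgt e == x)))].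

Definition connected (S : subgraph V E) : Prop :=
  vs S != set0 /\
  forall x y, x \in vs S -> y \in vs S -> connect (adj S) x y.

Definition deg (S : subgraph V E) (v : V) : nat :=
  #|[set e in es S | inc e v]|.

Definition is_cycle (S : subgraph V E) : Prop :=
  wf S /\ connected S /\ forall v, v \in vs S -> deg S v = 2%N.

Definition acyclic (S : subgraph V E) : Prop :=
  forall C, wf C -> subg C S -> ~ is_cycle C.

Definition is_tree (S : subgraph V E) : Prop :=
  wf S /\ connected S /\ acyclic S.

Definition leaves (T : subgraph V E) : {set V} :=
  [set v in vs T | deg T v == 1%N].

Variable R : realFieldType.
Variable l : E -> R.

Definition len (S : subgraph V E) : R := (\sum_(e in es S) l e)%R.

Definition conn_span (H : subgraph V E) (A : {set V}) (S : subgraph V E) : Prop :=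
  wf S /\ subg S H /\ connected S /\ A \subset vs S.

Definition is_sd (H : subgraph V E) (A : {set V}) (x : R) : Prop :=
  (exists S, conn_span H A S /\ len S = x) /\
  (forall S, conn_span H A S -> (x <= len S)%R).

(* Shortcut tree T for H (with sd given by is_sd; sd_H(A) = +oo if no
   connected subgraph of H contains A). *)
Definition shortcut_tree (T H : subgraph V E) : Prop :=
  wf T /\ wf H /\ is_tree T /\
      (* SCT1 *) vs T :&: vs H = leaves T /\
      (* SCT2 *) es T :&: es H = set0 /\
      (* SCT3 *) (forall x, is_sd H (leaves T) x -> (len T < x)%R) /\
      (* SCT4 *) (forall B : {set V}, B \proper leaves T ->
          forall y, is_sd T B y ->
          exists x, is_sd H B x /\ (x <= y)%R).

End Graphs.

(* Main.v *)
Require Import Defs.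
From HB Require Import structures.
From mathcomp Require Import all_boot all_order all_algebra.
From mathcomp Require Import zify.
From Stdlib Require Classical_Prop.
Import Order.TTheory GRing.Theory Num.Theory.
Set Implicit Arguments. Unset Strict Implicit.

Section Aux.
Variables (V E : finType) (src tgt : E -> V).
Hypothesis loopless : forall e, src e != tgt e.

Definition cross (X : {set V}) e := (src e \in X) != (tgt e \in X).

Lemma adj_sym G : symmetric (adj src tgt G).
Proof.
move=> x y; apply/existsP/existsP => -[e /andP[eG H]]; exists e;
  rewrite eG /=; by rewrite orbC.
Qed.

Lemma adj_ends G x y : adj src tgt G x y ->
  exists2 e, e \in es G & ((src e == x) && (tgt e == y)) || ((src e == y) && (tgt e == x)).
Proof. by case/existsP => e /andP[eG H]; exists e. Qed.

Lemma connect_vs G x y : wf src tgt G -> x \in vs G ->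
  connect (adj src tgt G) x y -> y \in vs G.
Proof.
move=> wG xG cxy; rewrite -(closed_connect _ cxy) //.
move=> u w /adj_ends [e eG H]; have [s t] := wG e eG.
by case/orP: H => /andP[/eqP <- /eqP <-]; rewrite s t.
Qed.

Lemma noncross_closed G (X : {set V}) : (forall e, e \in es G -> ~~ cross X e) ->
  forall x y, connect (adj src tgt G) x y -> (x \in X) = (y \in X).
Proof.
move=> nc x y; apply: closed_connect => u w /adj_ends [e eG H].
have := nc e eG; rewrite /cross negbK => /eqP.
by case/orP: H => /andP[/eqP <- /eqP <-].
Qed.

Lemma cross_exists G (X : {set V}) x y : connected src tgt G ->
  x \in X -> x \in vs G -> y \in vs G -> y \notin X ->
  exists2 e, e \in es G & cross X e.
Proof.
move=> [_ cG] xX xG yG yX.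
case: (boolP [exists e, (e \in es G) && cross X e]).
  by case/existsP => e /andP[]; exists e.
move/existsPn => H.
suff : (x \in X) = (y \in X) by rewrite xX (negbTE yX).
apply: (noncross_closed (G := G)) (cG x y xG yG) => e eG.
by have := H e; rewrite eG.
Qed.

Lemma grow G : wf src tgt G -> connected src tgt G ->
  forall k, k < #|vs G| -> exists (X : {set V}) (F : {set E}), [/\ X \subset vs G, F \subset es G,
    #|X| = k.+1, #|F| = k &
    (forall e, e \in F -> (src e \in X) && (tgt e \in X))].
Proof.
move=> wG cG; elim=> [|k IH] klt.
  have [x0 x0G] : exists x0, x0 \in vs G by apply/card_gt0P.
  exists [set x0], set0; split; rewrite ?cards1 ?cards0 ?sub0set ?sub1set //.
  by move=> e; rewrite in_set0.
have [X [F [XG FG cX cF HF]]] := IH (ltnW klt).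
have [y yG yX] : exists2 y, y \in vs G & y \notin X.
  case: (boolP (vs G \subset X)) => [sub|/subsetPn [y ? ?]]; last by exists y.
  by have := subset_leq_card sub; rewrite cX; lia.
have [x xX] : exists x, x \in X by apply/card_gt0P; rewrite cX.
have [e eG ceX] := cross_exists cG xX (subsetP XG x xX) yG yX.
have eF : e \notin F.
  apply/negP => /HF /andP[a b]; move: ceX; by rewrite /cross a b.
have [se te] := wG e eG.
set w := if src e \in X then tgt e else src e.
have wX : w \notin X.
  move: ceX; rewrite /w /cross; case sX: (src e \in X); case tX: (tgt e \in X) => //= _; by rewrite ?sX ?tX.
have wG' : w \in vs G by rewrite /w; case: ifP.
exists (w |: X), (e |: F); split.
- by rewrite subUset sub1set wG'.
- by rewrite subUset sub1set eG.
- by rewrite cardsU1 wX cX.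
- by rewrite cardsU1 eF cF.
move=> f; rewrite in_setU1 => /orP [/eqP -> | /HF /andP[a b]].
  move: ceX; rewrite /w /cross !in_setU1.
  by case: (src e \in X); case: (tgt e \in X); rewrite ?eqxx ?orbT.
by rewrite !in_setU1 a b !orbT.
Qed.

Lemma conn_edges G : wf src tgt G -> connected src tgt G ->
  #|vs G| <= #|es G| + 1.
Proof.
move=> wG cG; case n: #|vs G| => [//|n'].
have h : n' < #|vs G| by rewrite n.
have [X [F [_ FG _ cF _]]] := grow wG cG h.
by have := subset_leq_card FG; rewrite cF; lia.
Qed.

Lemma handshake G (X : {set V}) :
  \sum_(x in X) deg src tgt G x =
  \sum_(e in es G) ((src e \in X) + (tgt e \in X)).
Proof.
have Hd : forall x, deg src tgt G x = \sum_(e in es G) (inc src tgt e x : nat).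
  move=> x; rewrite /deg -sum1_card big_mkcond [RHS]big_mkcond /=.
  apply: eq_bigr => e _; rewrite inE; by case: (e \in es G); case: inc.
rewrite (eq_bigr _ (fun x _ => Hd x)).
rewrite exchange_big /=; apply: eq_bigr => e _.
have Hi : forall x, (inc src tgt e x : nat) = (src e == x) + (tgt e == x).
  move=> x; rewrite /inc; case: eqP => [<-|]; last by [].
  by rewrite eq_sym (negbTE (loopless e)).
rewrite (eq_bigr _ (fun x _ => Hi x)).
rewrite big_split /=; congr (_ + _).
- case: (boolP (src e \in X)) => sX.
    rewrite (bigD1 (src e)) //= eqxx big1 // => x /andP[_ /negbTE].
    by rewrite eq_sym => ->.
  rewrite big1 // => x xX; case: eqP => // ex; by move: sX; rewrite ex xX.
- case: (boolP (tgt e \in X)) => sX.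
    rewrite (bigD1 (tgt e)) //= eqxx big1 // => x /andP[_ /negbTE].
    by rewrite eq_sym => ->.
  rewrite big1 // => x xX; case: eqP => // ex; by move: sX; rewrite ex xX.
Qed.


Lemma cycle_del_conn (C : subgraph V E) f : is_cycle src tgt C -> f \in es C ->
  connected src tgt (Subgraph (vs C) (es C :\ f)).
Proof.
move=> [wC [[ne cC] dC]] fC.
set Cf := Subgraph (vs C) (es C :\ f).
have wCf : wf src tgt Cf by move=> e; rewrite inE => /andP[_ /wC].
have [sf tf] := wC f fC.
set X := [set y | connect (adj src tgt Cf) (src f) y].
have Xsub : X \subset vs C.
  apply/subsetP => y; rewrite inE; exact: (connect_vs wCf sf).
have adjE : forall e, e \in es C :\ f -> adj src tgt Cf (src e) (tgt e).
  move=> e eCf; apply/existsP; exists e; by rewrite eCf !eqxx.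
have ab : connect (adj src tgt Cf) (src f) (tgt f).
  apply/negPn/negP => nb.
  have H := handshake C X.
  rewrite (eq_bigr (fun=> 2)) in H; last by move=> x xX; rewrite dC // (subsetP Xsub).
  rewrite sum_nat_const (big_setD1 f fC) /= in H.
  have sX : src f \in X by rewrite inE connect0.
  have tX : tgt f \in X = false by rewrite inE (negbTE nb).
  rewrite sX tX in H.
  rewrite (eq_bigr (fun e => (src e \in X) * 2)) in H; last first.
    move=> e eCf; have : (src e \in X) = (tgt e \in X).
      rewrite !inE; apply/idP/idP => h; apply: connect_trans h _; apply: connect1.
        exact: adjE.
      by rewrite adj_sym; apply: adjE.
    by move=> ->; rewrite muln2 addnn.
  rewrite -big_distrl /= in H; lia.
split; first by [].
move=> x y xC yC; have := cC x y xC yC; apply: connect_sub => u w /adj_ends [e eC H].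
case: (eqVneq e f) => [ef|nef].
  move: H; rewrite ef; case/orP => /andP[/eqP <- /eqP <-]; first exact: ab.
  by rewrite (sym_connect_sym (@adj_sym _)).
apply: connect1; apply/existsP; exists e; by rewrite !inE nef eC.
Qed.

Lemma ex_min (R : realFieldType) (P : subgraph V E -> Prop) (f : subgraph V E -> R) :
  (exists S, P S) -> exists S, P S /\ forall S', P S' -> (f S <= f S')%R.
Proof.
pose K := ({set V} * {set E})%type.
pose g := fun k : K => Subgraph k.1 k.2.
have main : forall s : seq K, (exists k, k \in s /\ P (g k)) ->
    exists k, P (g k) /\ forall k', k' \in s -> P (g k') -> (f (g k) <= f (g k'))%R.
  elim=> [|k0 s IH]; first by case=> k [].
  move=> Hex; case: (Classical_Prop.classic (exists k, k \in s /\ P (g k))) => [H|H].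
    have [k [Pk km]] := IH H.
    case: (Classical_Prop.classic (P (g k0))) => P0.
      case: (lerP (f (g k)) (f (g k0))) => cmp.
        exists k; split=> // k'; rewrite inE => /orP[/eqP -> //|]; exact: km.
      exists k0; split=> // k'; rewrite inE => /orP[/eqP -> //|k's Pk'].
      apply: le_trans (ltW cmp) (km k' k's Pk').
    exists k; split=> // k'; rewrite inE => /orP[/eqP -> //|]; exact: km.
  have P0 : P (g k0).
    case: Hex => k []; rewrite inE => /orP[/eqP -> //|ks Pk].
    by case: H; exists k.
  exists k0; split=> // k'; rewrite inE => /orP[/eqP -> //|k's Pk'].
  by case: H; exists k'.
case=> S0 PS0.
have [k [Pk km]] : exists k, P (g k) /\ forall k', k' \in enum [set: {set V} * {set E}] -> P (g k') -> (f (g k) <= f (g k'))%R.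
  apply: main; exists (vs S0, es S0); rewrite mem_enum inE; split=> //.
  by case: S0 PS0.
exists (g k); split=> // S' PS'.
have := km (vs S', es S'); rewrite mem_enum inE; case: S' PS' => ? ? PS'; exact.
Qed.

End Aux.

From mathcomp Require Import lra.
Unset Implicit Arguments.

Theorem lemma5p4 (R : realFieldType) (V E : finType) (src tgt : E -> V)
  (loopless : forall e, src e != tgt e)
  (T C : subgraph V E) (l : E -> R)
  (lpos : forall e, e \in es T :|: es C -> (0 < l e)%R)
  (hC : is_cycle src tgt C)
  (hT : shortcut_tree src tgt l T C)
  (hVC : vs C = leaves src tgt T)
  (h3 : (3 <= #|leaves src tgt T|)%N)
  (hdeg : forall v, v \in vs T -> deg src tgt T v != 2%N)
  (e0 : E) (he0 : e0 \in es C) :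
  (forall e1 e2, e1 \in es C -> e2 \in es C -> e1 != e2 ->
     (exists v, inc src tgt e1 v && inc src tgt e2 v) ->
     (l e0 < l e1 + l e2)%R)
  /\ (l e0 < len l C / 2%:R)%R.
Proof.
have [wC [cCn dC]] := hC.
have [wT [_ [tT [S1 [S2 [S3 S4]]]]]] := hT.
have [_ [cT _]] := tT.
have posC : forall e, e \in es C -> (0 < l e)%R.
  by move=> e eC; apply: lpos; rewrite inE eC orbT.
have LT : leaves src tgt T \subset vs T.
  by apply/subsetP => x; rewrite inE => /andP[].
have spanC : conn_span src tgt C (leaves src tgt T) C.
  split=> //; split; first by split; apply: subxx.
  by split=> //; rewrite hVC.
have [SC [SCc SCmin]] := ex_min (len l) (ex_intro _ C spanC).
have zlt := S3 (len l SC) (conj (ex_intro _ SC (conj SCc erefl)) SCmin).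
have partA : forall e1 e2, e1 \in es C -> e2 \in es C -> e1 != e2 ->
     (exists v, inc src tgt e1 v && inc src tgt e2 v) ->
     (l e0 < l e1 + l e2)%R.
  move=> e1 e2 e1C e2C ne [v /andP[i1 i2]].
  have vC : v \in vs C.
    have [s t] := wC e1 e1C; move: i1; rewrite /inc; by case/orP => /eqP <-.
  have p1 := posC e1 e1C; have p2 := posC e2 e2C.
  case: (eqVneq e0 e1) => [->|n1]; first by clear -p1 p2; lra.
  case: (eqVneq e0 e2) => [->|n2]; first by clear -p1 p2; lra.
  set B := vs C :\ v.
  have BL : B \proper leaves src tgt T by rewrite -hVC properD1.
  have HT : conn_span src tgt T B T.
    split=> //; split; first by split; apply: subxx.
    split=> //; exact: subset_trans (proper_sub BL) LT.
  have [ST [STc STmin]] := ex_min (len l) (ex_intro _ T HT).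
  have yT : (len l ST <= len l T)%R := STmin T HT.
  have [x [sdx xy]] := S4 B BL (len l ST) (conj (ex_intro _ ST (conj STc erefl)) STmin).
  have [[S [cS lS]] _] := sdx.
  have [wS [[sV sE] [cS' BS]]] := cS.
  have vS : v \notin vs S.
    apply/negP => vS.
    have : conn_span src tgt C (leaves src tgt T) S.
      split=> //; split=> //; split=> //.
      apply/subsetP => u; rewrite -hVC => uC; case: (eqVneq u v) => [->//| nuv].
      by apply: (subsetP BS); rewrite /B !inE; apply/andP.
    move/SCmin => h; rewrite lS in h.
    by have := lt_le_trans zlt (le_trans h (le_trans xy yT)); rewrite ltxx.
  have e1S : e1 \notin es S.
    apply/negP => /wS [s t]; move: i1 vS; rewrite /inc; by case/orP => /eqP <-; rewrite ?s ?t.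
  have e2S : e2 \notin es S.
    apply/negP => /wS [s t]; move: i2 vS; rewrite /inc; by case/orP => /eqP <-; rewrite ?s ?t.
  have hCf : conn_span src tgt C (leaves src tgt T) (Subgraph (vs C) (es C :\ e0)).
    split; first by move=> e; rewrite inE => /andP[_ /wC].
    split; first by split; rewrite /= ?subxx ?subsetDl.
    split; first exact: (cycle_del_conn loopless hC he0).
    by rewrite /= hVC.
  have z2 := SCmin _ hCf.
  have lenC0 : len l C = (l e0 + len l (Subgraph (vs C) (es C :\ e0)))%R.
    by rewrite /len (big_setD1 e0 he0).
  have vSC : vs S = vs C :\ v.
    apply/eqP; rewrite eqEsubset; apply/andP; split=> //.
    apply/subsetP => u uS; rewrite !inE (subsetP sV u uS) andbT.
    by apply/negP => /eqP uv; move: vS; rewrite -uv uS.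
  have ecard : #|es C| = #|vs C|.
    have H := handshake loopless C (vs C).
    rewrite (eq_bigr (fun=> 2)) in H; last by move=> u uC; rewrite dC.
    have H2 : \sum_(e in es C) ((src e \in vs C) + (tgt e \in vs C)) = \sum_(e in es C) 2.
      by apply: eq_bigr => e eC; have [s t] := wC e eC; rewrite s t.
    rewrite H2 !sum_nat_const in H; move: H.
    move: (#|es C|) (#|vs C|) => a b h; clear -h; lia.
  have e2in : e2 \in es C :\ e1 by rewrite !inE e2C andbT eq_sym.
  have esS : es S = es C :\ e1 :\ e2.
    apply/eqP; rewrite eqEcard; apply/andP; split.
      apply/subsetP => e eS; rewrite !inE (subsetP sE e eS) andbT.
      apply/andP; split; apply/eqP => ee.
        by move: e2S; rewrite -ee eS.
      by move: e1S; rewrite -ee eS.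
    have := conn_edges wS cS'; rewrite vSC.
    have c1 := cardsD1 v (vs C); rewrite vC in c1.
    have c2 := cardsD1 e1 (es C); rewrite e1C in c2.
    have c3 := cardsD1 e2 (es C :\ e1); rewrite e2in in c3.
    move=> hc; move: hc c1 c2 c3 ecard.
    move: (#|es S|) (#|es C :\ e1 :\ e2|) (#|es C :\ e1|) (#|es C|) (#|vs C :\ v|) (#|vs C|).
    move=> a b c d f g k1 k2 k3 k4 k5; clear -k1 k2 k3 k4 k5; lia.
  have lenS : len l C = (l e1 + (l e2 + len l S))%R.
    by rewrite /len esS (big_setD1 e1 e1C) (big_setD1 e2 e2in).
  clear -lS xy yT zlt z2 lenC0 lenS; lra.
split; first exact: partA.
have h3' : 3 <= #|vs C| by rewrite hVC.
have : 0 < #|vs C :\ src e0 :\ tgt e0|.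
  have c1 := cardsD1 (src e0) (vs C).
  have c2 := cardsD1 (tgt e0) (vs C :\ src e0).
  have b1 : ((src e0 \in vs C) : nat) <= 1 by case: (src e0 \in vs C).
  have b2 : ((tgt e0 \in vs C :\ src e0) : nat) <= 1 by case: (_ \in _).
  move: h3' c1 c2 b1 b2.
  move: (#|vs C :\ src e0 :\ tgt e0|) (#|vs C :\ src e0|) (#|vs C|) ((src e0 \in vs C) : nat) ((tgt e0 \in vs C :\ src e0) : nat).
  move=> a b c d f k1 k2 k3 k4 k5; clear -k1 k2 k3 k4 k5; lia.
case/card_gt0P => v; rewrite !inE => /and3P[vt vs vC].
have := dC v vC; move/eqP/cards2P => [e1 [e2 [ne12 Hset]]].
have : e1 \in [set e in es C | inc src tgt e v] by rewrite Hset !inE eqxx.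
rewrite inE => /andP[e1C i1].
have : e2 \in [set e in es C | inc src tgt e v] by rewrite Hset !inE eqxx orbT.
rewrite inE => /andP[e2C i2].
have hA := partA e1 e2 e1C e2C ne12 (ex_intro _ v (introT andP (conj i1 i2))).
have ni0 : inc src tgt e0 v = false.
  by rewrite /inc; apply/negbTE; rewrite negb_or eq_sym vs eq_sym vt.
have n01 : e0 != e1 by apply/eqP => e01; move: i1; rewrite -e01 ni0.
have n02 : e0 != e2 by apply/eqP => e02; move: i2; rewrite -e02 ni0.
have e1in : e1 \in es C :\ e0 by rewrite !inE e1C andbT eq_sym.
have e2in : e2 \in es C :\ e0 :\ e1.
  by rewrite !inE e2C andbT; apply/andP; split; rewrite eq_sym.
have lenC : len l C = (l e0 + (l e1 + (l e2 +
    \sum_(e in es C :\ e0 :\ e1 :\ e2) l e)))%R.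
  by rewrite /len (big_setD1 e0 he0) (big_setD1 e1 e1in) (big_setD1 e2 e2in).
have rest : (0 <= \sum_(e in es C :\ e0 :\ e1 :\ e2) l e)%R.
  apply: sumr_ge0 => e; rewrite !inE => /and4P[_ _ _ eC].
  exact: ltW (posC e eC).
clear -hA lenC rest; lra.
Qed.
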